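(* Let $a<b$ and let $f:[a,b]\rightarrow\mathbb{R}$ be a differentiable mapping in $(a,b)$ such that $f'\in L^1[a,b]$ and $\gamma\le f'(x)\le \Gamma$ for all $x\in [a,b]$, where $\gamma,\Gamma$ are real constants. Put $S=\frac{f(b)-f(a)}{b-a}$. Then \[ \left|f\left(\frac{a+b}{2}\right)-\frac{1}{b-a}\int_{a}^{b}f(t)\,dt\right|\leq \frac{b-a}{2}(S-\gamma) \] and \[ \left|f\left(\frac{a+b}{2}\right)-\frac{1}{b-a}\int_{a}^{b}f(t)\,dt\right|\leq \frac{b-a}{2}(\Gamma-S). \] *)

(* Defs.v *)
From HB Require Import structures.
From mathcomp Require Import all_boot all_order all_algebra.
From mathcomp Require Import all_classical all_reals all_analysis.

(* Main.v *)
Require Import Defs.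
From HB Require Import structures.
From mathcomp Require Import all_boot all_order all_algebra.
From mathcomp Require Import all_classical all_reals all_analysis.
From mathcomp Require Import ring lra.
Import Order.TTheory GRing.Theory Num.Theory.
Import numFieldNormedType.Exports.
Local Open Scope classical_set_scope.
Local Open Scope ring_scope.

Section S.
Variable R : realType.
Notation mu := (@lebesgue_measure R).

Lemma sq_derive (x : R) : is_derive x 1 (fun y : R => 2^-1 * (y * y)) x.
Proof.
have h : is_derive x 1 (fun y : R => y * y) (x *: 1 + x *: 1).
  exact: is_deriveM.
have := is_deriveZ (2^-1 : R) h.
have -> : (2^-1 : R) *: (x%:A + x%:A) = x.
  rewrite /GRing.scale /= !mulr1. lra.
done.
Qed.

Lemma int_id (a b : R) : a < b ->
  \int[mu]_(x in `[a, b]) x = 2^-1 * (b * b) - 2^-1 * (a * a).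
Proof.
move=> ab.
have := @continuous_FTC2 R id (fun y => 2^-1 * (y * y)) a b ab.
rewrite /Rintegral => ->.
- by rewrite -EFinB.
- by apply: continuous_subspaceT => x; exact: cvg_id.
- split.
  + by move=> x _; apply: ex_derive; exact: sq_derive.
  + apply: cvg_at_right_filter.
    have H : differentiable (fun y : R => 2^-1 * (y * y)) a.
      apply/derivable1_diffP. exact: (@ex_derive _ _ _ _ _ _ _ (sq_derive a)).
    exact: differentiable_continuous H.
  + apply: cvg_at_left_filter.
    have H : differentiable (fun y : R => 2^-1 * (y * y)) b.
      apply/derivable1_diffP; exact: (@ex_derive _ _ _ _ _ _ _ (sq_derive b)).
    exact: differentiable_continuous H.
- move=> x _; rewrite derive1E; exact: (@derive_val _ _ _ _ _ _ _ (sq_derive x)).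
Qed.
Lemma itv_bounds (g : R -> R) (c d lo hi : R) : c <= d ->
  mu.-integrable `[c, d] (EFin \o g) ->
  (forall x, c <= x <= d -> lo <= g x <= hi) ->
  lo * (d - c) <= \int[mu]_(x in `[c, d]) g x <= hi * (d - c).
Proof.
move=> cd ig H.
have mu_cd : fine (mu `[c, d]) = d - c.
  rewrite lebesgue_measure_itv /= lte_fin.
  case: ltgtP cd => //=.
  by move=> -> _; rewrite subrr.
apply/andP; split.
- rewrite -mu_cd -Rintegral_cst //; apply: le_Rintegral => //.
    apply: continuous_compact_integrable; first exact: segment_compact.
    apply: continuous_subspaceT => x; exact: cst_continuous.
  by move=> x /=; rewrite in_itv /= => /H /andP[].
- rewrite -mu_cd -Rintegral_cst //; apply: le_Rintegral => //.
    apply: continuous_compact_integrable; first exact: segment_compact.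
    apply: continuous_subspaceT => x; exact: cst_continuous.
  by move=> x /=; rewrite in_itv /= => /H /andP[].
Qed.

Lemma mono (a b k K : R) (f : R -> R) :
  {within `[a, b], continuous f} ->
  (forall x, a < x < b -> derivable f x 1) ->
  (forall x, a < x < b -> k <= (derive1 f) x <= K) ->
  forall x y, a <= x -> x <= y -> y <= b ->
  k * (y - x) <= f y - f x <= K * (y - x).
Proof.
move=> cf df hb x y ax xy yb.
case: (ltgtP x y) xy => // [xy _|-> _]; last by rewrite !subrr !mulr0 lexx.
have sub : `]x, y[ `<=` `]a, b[.
  move=> z /=; rewrite !in_itv /= => /andP[z1 z2].
  by rewrite (le_lt_trans ax z1) (lt_le_trans z2 yb).
have H1 : forall z, z \in `]x, y[ -> is_derive z 1 f ((derive1 f) z).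
  move=> z zxy; rewrite derive1E; apply: derivableP; apply: df.
  by have := sub z; rewrite /= in_itv /=; apply; move: zxy; rewrite in_itv. 
have H2 : {within `[x, y], continuous f}.
  apply: continuous_subspaceW cf => z /=; rewrite !in_itv /= => /andP[z1 z2].
  by rewrite (le_trans ax z1) (le_trans z2 yb).
have [c cxy ->] := MVT xy H1 H2.
have /andP[c1 c2] : k <= (derive1 f) c <= K.
  by apply: hb; have := sub c; rewrite /= in_itv /=; apply; move: cxy; rewrite in_itv.
by rewrite !ler_wpM2r // subr_ge0 ltW.
Qed.

Lemma avg_bounds (h X lo hi : R) : 0 < h -> h * lo <= X <= h * hi ->
  lo <= h^-1 * X <= hi.
Proof.
move=> h0 /andP[H1 H2].
have E : X = h * (h^-1 * X) by rewrite mulrA mulfV ?mul1r // gt_eqF.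
rewrite E in H1 H2.
by rewrite -(ler_pM2l h0) H1 -(ler_pM2l h0) H2.
Qed.

Lemma core (a b k P1 Q1 P2 Q2 : R) (f : R -> R) : a < b ->
  {within `[a, b], continuous f} ->
  (forall x, a <= x <= (a + b) / 2 -> P1 <= f x - k * x <= Q1) ->
  (forall x, (a + b) / 2 <= x <= b -> P2 <= f x - k * x <= Q2) ->
  (P1 + P2) / 2 <= (b - a)^-1 * (\int[mu]_(t in `[a, b]) f t) - k * ((a + b) / 2)
    <= (Q1 + Q2) / 2.
Proof.
move=> ab cf H1 H2.
have am : a <= (a + b) / 2 by clear -ab; lra.
have mb : (a + b) / 2 <= b by clear -ab; lra.
set m := (a + b) / 2 in H1 H2 am mb *.
have If : mu.-integrable `[a, b] (EFin \o f).
  by apply: continuous_compact_integrable => //; exact: segment_compact.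
have Iid : mu.-integrable `[a, b] (EFin \o (fun x : R => x)).
  apply: continuous_compact_integrable; first exact: segment_compact.
  by apply: continuous_subspaceT => x; exact: cvg_id.
have Ik : mu.-integrable `[a, b] (EFin \o (fun x : R => k * x)).
  apply: continuous_compact_integrable; first exact: segment_compact.
  apply: continuous_subspaceT => x; apply: cvgMr; exact: cvg_id.
set g := fun x => f x - k * x.
have Ig : mu.-integrable `[a, b] (EFin \o g).
  apply: eq_integrable (integrableB _ If Ik) => //.
have E1 : \int[mu]_(t in `[a, b]) f t =
    \int[mu]_(t in `[a, b]) g t + k * \int[mu]_(t in `[a, b]) t.
  by rewrite /g RintegralB // -RintegralZl // subrK.
have E2 : \int[mu]_(t in `[a, b]) g t =
    \int[mu]_(t in `[a, m]) g t + \int[mu]_(t in `[m, b]) g t.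
  have := @Rintegral_itvB R g (BLeft a) (BRight b) m Ig.
  rewrite !bnd_simp => /(_ am mb).
  rewrite Rintegral_itv_obnd_cbnd; last first.
    apply: integrableS Ig => //; apply: subset_itvr; rewrite bnd_simp //.
  by move=> <-; rewrite addrC subrK.
have Iam : mu.-integrable `[a, m] (EFin \o g).
  by apply: integrableS Ig => //; apply: subset_itvl; rewrite bnd_simp.
have Imb : mu.-integrable `[m, b] (EFin \o g).
  by apply: integrableS Ig => //; apply: subset_itvr; rewrite bnd_simp.
have /andP[B1 B1'] := @itv_bounds g a m P1 Q1 am Iam H1.
have /andP[B2 B2'] := @itv_bounds g m b P2 Q2 mb Imb H2.
rewrite E1 E2 int_id //.
set G1 := \int[mu]_(t in `[a, m]) g t in B1 B1' *.
set G2 := \int[mu]_(t in `[m, b]) g t in B2 B2' *.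
have -> : (b - a)^-1 * (G1 + G2 + k * (2^-1 * (b * b) - 2^-1 * (a * a))) - k * m
    = (b - a)^-1 * (G1 + G2).
  by rewrite /m; field; rewrite subr_eq0 gt_eqF.
apply: avg_bounds; first by rewrite subr_gt0.
rewrite /m in B1 B1' B2 B2'.
clear -B1 B1' B2 B2'.
apply/andP; split; nra.
Qed.
End S.

Theorem corollary2p3 (R : realType) (a b gamma Gamma : R) (f : R -> R) :
  a < b ->
  {within `[a, b], continuous f} ->
  (forall x, a < x < b -> derivable f x 1) ->
  (@lebesgue_measure R).-integrable `[a, b] (EFin \o derive1 f) ->
  (forall x, a < x < b -> gamma <= derive1 f x <= Gamma) ->
  let S := (f b - f a) / (b - a) in
  `| f ((a + b) / 2) - (b - a)^-1 * (\int[@lebesgue_measure R]_(t in `[a, b]) f t) |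
      <= (b - a) / 2 * (S - gamma) /\
  `| f ((a + b) / 2) - (b - a)^-1 * (\int[@lebesgue_measure R]_(t in `[a, b]) f t) |
      <= (b - a) / 2 * (Gamma - S).
Proof.
move=> ab cf df _ hb S.
have mo := @mono R a b gamma Gamma f cf df hb.
have am : a <= (a + b) / 2 by clear -ab; lra.
have mb : (a + b) / 2 <= b by clear -ab; lra.
have Cg := @core R a b gamma (f a - gamma * a) (f ((a + b) / 2) - gamma * ((a + b) / 2))
   (f ((a + b) / 2) - gamma * ((a + b) / 2)) (f b - gamma * b) f ab cf.
have CG := @core R a b Gamma (f ((a + b) / 2) - Gamma * ((a + b) / 2)) (f a - Gamma * a)
   (f b - Gamma * b) (f ((a + b) / 2) - Gamma * ((a + b) / 2)) f ab cf.
have ES1 : (b - a) / 2 * (S - gamma) = (f b - f a - gamma * (b - a)) / 2.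
  by rewrite /S; field; rewrite subr_eq0 gt_eqF.
have ES2 : (b - a) / 2 * (Gamma - S) = (Gamma * (b - a) - (f b - f a)) / 2.
  by rewrite /S; field; rewrite subr_eq0 gt_eqF.
rewrite ES1 ES2.
set A := (b - a)^-1 * _ in Cg CG *.
set m := (a + b) / 2 in am mb Cg CG *.
have /andP[l1 u1] := mo a m (lexx a) am mb.
have /andP[l2 u2] := mo m b am mb (lexx b).
have /andP[C1 C1'] : (f a - gamma * a + (f m - gamma * m)) / 2 <= A - gamma * m
    <= (f m - gamma * m + (f b - gamma * b)) / 2.
  apply: Cg.
  - move=> x /andP[ax xm].
    have /andP[l3 u3] := mo a x (lexx a) ax (le_trans xm mb).
    have /andP[l4 u4] := mo x m ax xm mb.
    clear -l3 l4; apply/andP; split; lra.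
  - move=> x /andP[mx xb].
    have /andP[l3 u3] := mo m x am mx xb.
    have /andP[l4 u4] := mo x b (le_trans am mx) xb (lexx b).
    clear -l3 l4; apply/andP; split; lra.
have /andP[C2 C2'] : (f m - Gamma * m + (f b - Gamma * b)) / 2 <= A - Gamma * m
    <= (f a - Gamma * a + (f m - Gamma * m)) / 2.
  apply: CG.
  - move=> x /andP[ax xm].
    have /andP[l3 u3] := mo a x (lexx a) ax (le_trans xm mb).
    have /andP[l4 u4] := mo x m ax xm mb.
    clear -u3 u4; apply/andP; split; lra.
  - move=> x /andP[mx xb].
    have /andP[l3 u3] := mo m x am mx xb.
    have /andP[l4 u4] := mo x b (le_trans am mx) xb (lexx b).
    clear -u3 u4; apply/andP; split; lra.
rewrite /m in l1 u1 l2 u2 C1 C1' C2 C2'.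
clear -l1 u1 l2 u2 C1 C1' C2 C2'.
split; rewrite ler_norml; apply/andP; split; lra.
Qed.
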